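(* Let $S_0$ be a nonempty set and let $\mathcal{G}$ be a group acting simply transitively on $S_0$ (for every $x,y \in S_0$ there is a unique $T \in \mathcal{G}$ with $Tx = y$). Let $S$ be a collection of subsets of $S_0$, partially ordered by set inclusion, and extend the action of $\mathcal{G}$ to subsets by $Ta = \{Tx : x \in a\}$ (assume $S$ is closed under this action). Suppose every $a \in S$ has the fixed point property with respect to $\mathcal{G}$: for all $T \in \mathcal{G}$, $Ta \subseteq a$ implies there exists $x \in a$ with $Tx = x$. Then on the set $S/\mathcal{G}$ of orbits, the strong relation ($A \preceq B$ iff for all $a \in A$ there is $b \in B$ with $a \subseteq b$) and the weak relation ($A \preceq B$ iff there exist $a \in A$, $b \in B$ with $a \subseteq b$) are identical, and this relation is a partial order on $S/\mathcal{G}$. *)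

(* Defs.v *)
From mathcomp Require Import all_boot.
From mathcomp Require Import boolp classical_sets.
Set Implicit Arguments. Unset Strict Implicit. Unset Printing Implicit Defensive.
Local Open Scope classical_set_scope.

Definition is_group (G : Type) (mul : G -> G -> G) (inv : G -> G) (one : G) : Prop :=
  [/\ (forall a b c, mul a (mul b c) = mul (mul a b) c),
      (forall a, mul one a = a),
      (forall a, mul a one = a),
      (forall a, mul (inv a) a = one) &
      (forall a, mul a (inv a) = one)].

Definition is_action (G X : Type) (mul : G -> G -> G) (one : G)
  (act : G -> X -> X) : Prop :=
  (forall x, act one x = x) /\
  (forall g h x, act (mul g h) x = act g (act h x)).

Definition simply_transitive (G X : Type) (act : G -> X -> X) : Prop :=
  forall x y : X, exists! T : G, act T x = y.

Definition act_set (G X : Type) (act : G -> X -> X) (T : G) (a : set X) : set X :=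
  act T @` a.

Definition fixed_point_property (G X : Type) (act : G -> X -> X) (a : set X) : Prop :=
  forall T : G, act_set act T a `<=` a -> exists2 x, a x & act T x = x.

Definition orbit (G X : Type) (act : G -> X -> X) (a : set X) : set (set X) :=
  [set b | exists T : G, b = act_set act T a].

Definition orbits (G X : Type) (act : G -> X -> X) (S : set (set X)) : set (set (set X)) :=
  [set A | exists2 a, S a & A = orbit act a].

Definition strong_le (X : Type) (A B : set (set X)) : Prop :=
  forall a, A a -> exists2 b, B b & a `<=` b.

Definition weak_le (X : Type) (A B : set (set X)) : Prop :=
  exists a b, [/\ A a, B b & a `<=` b].

(* Main.v *)
Require Import Defs.
From mathcomp Require Import all_boot.
From mathcomp Require Import boolp classical_sets.
Local Open Scope classical_set_scope.

Theorem corollary2 (G X : Type) (mul : G -> G -> G) (inv : G -> G) (one : G)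
  (act : G -> X -> X) (S : set (set X))
  (HX : inhabited X)
  (Hgrp : is_group mul inv one)
  (Hact : is_action mul one act)
  (Hst : simply_transitive act)
  (HS : forall T a, S a -> S (act_set act T a))
  (Hfp : forall a, S a -> fixed_point_property act a) :
  (forall A B, orbits act S A -> orbits act S B ->
     (strong_le A B <-> weak_le A B)) /\
  (* partial order on S/G *)
  (forall A, orbits act S A -> strong_le A A) /\
  (forall A B, orbits act S A -> orbits act S B ->
     strong_le A B -> strong_le B A -> A = B) /\
  (forall A B C, orbits act S A -> orbits act S B -> orbits act S C ->
     strong_le A B -> strong_le B C -> strong_le A C).
Proof.
case: Hgrp => mA m1l m1r mVl mVr.
case: Hact => a1 aM.
have S1 : forall a, act_set act one a = a.
  move=> a; rewrite /act_set; apply/seteqP; split => x.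
    by case=> y ay <-; rewrite a1.
  by move=> ax; exists x => //; rewrite a1.
have SM : forall g h a, act_set act (mul g h) a = act_set act g (act_set act h a).
  move=> g h a; rewrite /act_set; apply/seteqP; split => x.
    by case=> y ay <-; exists (act h y); [exists y|rewrite aM].
  by case=> z [y ay <-] <-; exists y => //; rewrite aM.
have Smono : forall g a b, a `<=` b -> act_set act g a `<=` act_set act g b.
  by move=> g a b ab x [y ay <-]; exists y => //; apply: ab.
have fix1 : forall T a, S a -> act_set act T a `<=` a -> T = one.
  move=> T a Sa sub; have [x ax Tx] := Hfp a Sa T sub.
  have [U [_ Uu]] := Hst x x.
  by rewrite -(Uu T Tx) -(Uu one (a1 x)).
have orb_self : forall a, Defs.orbit act a a by move=> a; exists one; rewrite S1.
have orb_act : forall T a, Defs.orbit act (act_set act T a) = Defs.orbit act a.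
  move=> T a; apply/seteqP; split => b [g ->].
    by exists (mul g T); rewrite SM.
  by exists (mul g (inv T)); rewrite -SM -mA mVl m1r.
have weak_strong : forall A B, orbits act S A -> orbits act S B ->
    weak_le A B -> strong_le A B.
  move=> A B [a Sa ->] [b Sb ->] [a0 [b0 [[T1 ->] [T2 ->] sub]]] a' [T ->].
  exists (act_set act (mul T (inv T1)) (act_set act T2 b)).
    by exists (mul (mul T (inv T1)) T2); rewrite [in RHS]SM.
  have -> : act_set act T a = act_set act (mul T (inv T1)) (act_set act T1 a).
    by rewrite -SM -mA mVl m1r.
  exact: Smono.
split.
  move=> A B oA oB; split; last exact: weak_strong.
  case: oA => a Sa eA st; have [b Bb ab] := st a (ltac:(rewrite eA; exact: orb_self)).
  by exists a, b; split => //; rewrite eA; apply: orb_self.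
split.
  by move=> A _ a Aa; exists a.
split.
  move=> A B [a Sa ->] [b Sb ->] sAB sBA.
  have [b1 [T ->] ab] := sAB a (orb_self a).
  have [a2 [U ->] ba] := sBA b (orb_self b).
  have sub : a `<=` act_set act (mul T U) a.
    by rewrite SM; apply: (subset_trans ab); apply: Smono.
  have V1 : inv (mul T U) = one.
    apply: (fix1 _ a Sa).
    have := Smono (inv (mul T U)) _ _ sub; rewrite -SM mVl S1 => h; exact: h.
  have TU1 : mul T U = one by rewrite -[mul T U]m1r -V1 mVr.
  have eab : a = act_set act T b.
    apply/seteqP; split => //.
    by apply: (subset_trans (Smono T _ _ ba)); rewrite -SM TU1 S1.
  by rewrite eab orb_act.
move=> A B C _ _ _ sAB sBC a Aa.
have [b Bb ab] := sAB a Aa; have [c Cc bc] := sBC b Bb.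
by exists c => //; apply: subset_trans bc.
Qed.
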